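(* Let $\ell\ge1$ and $V=\prod_{j=\ell,\dots,2,1}(c_1x^jy^jc_2)^2$. If $C$ is an accepting computation of $V$, then $C$ never matches a symbol $x$ with another symbol from the same $x$-block, and never matches a symbol $y$ with another symbol from the same $y$-block.
   Context: Queue automaton: a configuration is written $Q\,\|\,x$ ($Q$ = queue contents, $x$ = remaining input); a step from $Q\,\|\,\sigma x$ ($\sigma$ a symbol) goes either to $Q\sigma\,\|\,x$ (push the input symbol) or, if $Q=\sigma Q'$, to $Q'\,\|\,x$ (the input symbol is matched against the leftmost queue symbol, which is popped; that queue symbol was pushed from an earlier input position and the two occurrences are said to be matched). An accepting computation of $w$ is a computation $\varepsilon\,\|\,w\vdash^*\varepsilon\,\|\,\varepsilon$ ($\varepsilon$ the empty string). Here $c_1,c_2,x,y$ are four distinct symbols. In $V=(c_1x^\ell y^\ell c_2)(c_1x^\ell y^\ell c_2)\cdots(c_1x^1y^1c_2)(c_1x^1y^1c_2)$, each displayed maximal subword $x^j$ is called an $x$-block and each displayed subword $y^j$ a $y$-block. *)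

(* Defs.v *)
From mathcomp Require Import all_boot.
Set Implicit Arguments. Unset Strict Implicit. Unset Printing Implicit Defensive.

Inductive sym := c1 | c2 | sx | sy.

(* A configuration Q || x of the queue automaton on input w.
   The queue Q is a list of symbols, each tagged with the input position
   (0-based) it was pushed from; the remaining input x is  drop i w,
   where i is the number of input symbols already read. *)
Definition config := (seq (nat * sym) * nat)%type.

(* One step of a computation on w.  The label is [Some (j, i)] when the
   input symbol at position i is matched against the queue symbol pushed
   from position j, and [None] for a push. *)
Inductive step (w : seq sym) : config -> config -> option (nat * nat) -> Prop :=
| step_push (Q : seq (nat * sym)) (i : nat) (s : sym) :
    onth w i = Some s -> step w (Q, i) (rcons Q (i, s), i.+1) None
| step_pop (Q : seq (nat * sym)) (j i : nat) (s : sym) :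
    onth w i = Some s -> step w ((j, s) :: Q, i) (Q, i.+1) (Some (j, i)).

Inductive comp (w : seq sym) : config -> seq (nat * nat) -> Prop :=
| comp_end : comp w ([::], size w) [::]
| comp_push c c' M : step w c c' None -> comp w c' M -> comp w c M
| comp_pop c c' j i M : step w c c' (Some (j, i)) -> comp w c' M ->
    comp w c ((j, i) :: M).

Definition accepting (w : seq sym) (M : seq (nat * nat)) : Prop :=
  comp w ([::], 0) M.

Definition factor (j : nat) : seq sym := c1 :: nseq j sx ++ nseq j sy ++ [:: c2].
Definition V (l : nat) : seq sym :=
  flatten [seq factor j ++ factor j | j <- rev (iota 1 l)].

Definition same_block (w : seq sym) (a : sym) (p q : nat) : Prop :=
  forall k, minn p q <= k <= maxn p q -> onth w k = Some a.

(* Main.v *)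
Require Import Defs.
From mathcomp Require Import all_boot.
From mathcomp Require Import zify.

Definition isC (s : sym) : bool := match s with c1 | c2 => true | _ => false end.

Definition Pw (w : seq sym) : Prop :=
  forall t s, onth w t = Some s -> ~~ isC s -> odd (count isC (take t w)).

Definition seen (w : seq sym) (j t : nat) : Prop :=
  exists k, j <= k < t /\ exists s, onth w k = Some s /\ isC s.

Definition Inv (w : seq sym) (Q : seq (nat * sym)) (t : nat) : Prop :=
  odd (count isC (map snd Q)) = odd (count isC (take t w)) /\
  forall n, n < size Q -> (nth (0, c1) Q n).1 < t /\
    (seen w (nth (0, c1) Q n).1 t \/ has isC (take n (map snd Q))).

Lemma take_succ (w : seq sym) t s : onth w t = Some s -> take t.+1 w = take t w ++ [:: s].
Proof.
move=> H.
have Hs : t < size w by rewrite -onthTE H.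
by rewrite (take_nth s Hs) (@onth_nth _ s s w t H) cats1.
Qed.

Arguments take_succ {w t s}.

Lemma seenS (w : seq sym) (j t : nat) : seen w j t -> seen w j t.+1.
Proof. move=> [k [Hk Hs]]; exists k; split => //; lia. Qed.

Lemma main (w : seq sym) (c : config) (M : seq (nat * nat)) : Defs.comp w c M -> Pw w -> Inv w (c.1) (c.2) ->
  forall j i, (j, i) \in M -> exists k, j <= k <= i /\ exists s, onth w k = Some s /\ isC s.
Proof.
move=> HC Pww.
elim: HC => [|d d' M' Hs HC IH|d d' j0 i0 M' Hs HC IH].
- by [].
- inversion Hs; subst => /= [[HP HG]]; apply: IH => /=; split.
  + by rewrite (take_succ H) map_rcons -!cats1 !count_cat !oddD HP.
  + move=> n; rewrite size_rcons ltnS leq_eqVlt => /orP [/eqP -> | Hn].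
    * rewrite nth_rcons ltnn eqxx /=; split; first done.
      rewrite map_rcons -cats1 take_size_cat ?size_map //.
      case Hc: (isC s).
      - by left; exists i; split; [lia | exists s].
      - right; rewrite has_count; apply: odd_gt0.
        by rewrite HP; apply: (Pww i s H); rewrite Hc.
    * rewrite nth_rcons Hn; have [A1 A2] := HG n Hn.
      split; first lia.
      case: A2 => [Hse|Hha]; first by left; apply: seenS.
      by right; rewrite map_rcons -cats1 take_cat size_map Hn.
- inversion Hs; subst; match goal with Hx : onth _ _ = Some _ |- _ => rename Hx into H end => /= [[HP HG]] j' i'.
  rewrite in_cons => /orP [/eqP [-> ->] | Hin].
  + have [A1 A2] := HG 0 (ltn0Sn _); rewrite /= in A1 A2.
    case Hc: (isC s).
    * by exists i0; split; [lia | exists s].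
    * case: A2 => [[k [Hk Hks]]|//]; exists k; split; [lia | done].
  + apply: IH => //=; split.
    * move: HP; rewrite (take_succ H) count_cat oddD /= oddD.
      by case: (isC s); case: (odd (count isC (map snd Q))); case: (odd (count isC (take i0 w))).
    * move=> n Hn; have [A1 A2] := HG n.+1 Hn; rewrite /= in A1 A2.
      split; first lia.
      case: A2 => [Hse|Hha]; first by left; apply: seenS.
      case Hc: (isC s); last by right; rewrite Hc in Hha.
      by left; exists i0; split; [lia | exists s].
Qed.

Lemma Pw_cat w1 w2 : Pw w1 -> Pw w2 -> ~~ odd (count isC w1) -> Pw (w1 ++ w2).
Proof.
move=> P1 P2 E t s; rewrite onth_cat take_cat.
case: ifP => Ht H Hc; first exact: (P1 t s H Hc).
by rewrite count_cat oddD (negbTE E) /= (P2 _ s H Hc).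
Qed.

Lemma Pw_factor j : Pw (factor j).
Proof.
move=> [|t] s /=.
- by move=> [<-].
- rewrite !onth_cat !size_nseq !onth_nseq.
  case: ifP => Ht1.
  + move=> _ _; rewrite take_cat size_nseq Ht1 take_nseq; last lia.
    by rewrite count_nseq /= ?mul0n.
  case: ifP => Ht2.
  + move=> _ _; rewrite take_cat size_nseq Ht1 count_cat count_nseq ?mul0n /=.
    rewrite take_cat size_nseq Ht2 take_nseq; last lia.
    by rewrite count_nseq ?mul0n.
  case: (t - j - j) => [|m] /=.
  + by move=> [<-].
  + by case: m.
Qed.

Lemma count_factor j : count isC (factor j) = 2.
Proof. by rewrite /factor /= !count_cat !count_nseq /= ?mul0n. Qed.

Lemma Pw_V (js : seq nat) : Pw (flatten [seq factor j ++ factor j | j <- js]).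
Proof.
elim: js => [|j js IH].
- by move=> t s; rewrite onth0n.
- change (Pw ((factor j ++ factor j) ++ flatten [seq factor j ++ factor j | j <- js])).
  apply: Pw_cat => //.
  + by apply: Pw_cat; [exact: Pw_factor | exact: Pw_factor | rewrite count_factor].
  + by rewrite count_cat !count_factor.
Qed.

Theorem lemma10 (l : nat) (M : seq (nat * nat)) :
  1 <= l -> accepting (V l) M ->
  forall j i, (j, i) \in M ->
    ~ same_block (V l) sx j i /\ ~ same_block (V l) sy j i.
Proof.
move=> _ HA j i Hin.
have [k [Hk [s [Hs Hc]]]] : exists k, j <= k <= i /\ exists s, onth (V l) k = Some s /\ isC s.
  have Hm := @main (V l) ([::], 0) M HA (Pw_V (rev (iota 1 l))).
  apply: (Hm _ j i Hin).
  by split; [rewrite take0 | ].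
have Hk' : minn j i <= k <= maxn j i by lia.
split => Hsb; have := Hsb k Hk'; rewrite Hs => -[E]; by rewrite E in Hc.
Qed.
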